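(* Let $n\ge1$, let $r>0$, and let $\zeta$ be an unordered $n$-tuple of integers $\{\zeta^1,\ldots,\zeta^n\}$ with $\sum_i(\zeta^i)^2=r^2$, having exactly $k\ge1$ non-zero entries. Let $N_\zeta$ be the set of all distinct vectors of the form $(\pm\zeta^{\pi(1)},\ldots,\pm\zeta^{\pi(n)})$, $\pi\in S_n$. For every $\xi\in N_\zeta$ and every $\bar s\in\{1,\ldots,k\}$ let $B(\xi,\bar s)=[\xi_1,\ldots,\xi_n]\in\mathbb{Z}^{n\times n}$ be the matrix whose columns are the vectors $\xi_1,\ldots,\xi_n$ constructed from $\xi$ and $\bar s$ by the following rule (with $i_1<\cdots<i_k$ the indices of the non-zero coordinates of $\xi$ and $j_1<\cdots<j_{n-k}$ those of its zero coordinates): $\xi_1=\xi$; for $p=2,\ldots,k-\bar s+1$, $\xi_p$ is $\xi$ with the sign of coordinate $i_{\bar s-1+p}$ changed; for $p=k-\bar s+2,\ldots,k$, $\xi_p$ is $\xi$ with the sign of coordinate $i_{\bar s-1+p-k}$ changed; for $p=k+1,\ldots,n$, $\xi_p$ is $\xi$ with coordinate $i_{\bar s}$ replaced by $0$ and coordinate $j_{p-k}$ replaced by $\xi^{i_{\bar s}}$. Let $K_\zeta$ denote the family of all matrices $B(\xi,\bar s)$, $\xi\in N_\zeta$, $\bar s\in\{1,\ldots,k\}$ (indexed by the pairs $(\xi,\bar s)$, so that $|K_\zeta|=k|N_\zeta|$). Then every vector $\xi\in N_\zeta$ occurs as a column of exactly $nk$ members of the family $K_\zeta$.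
   Context: Each matrix $B(\xi,\bar s)$ is viewed as generating the lattice $B\mathbb{Z}^n$; ''occurs as a column of exactly $nk$ members'' counts members of the indexed family $K_\zeta$. *)

(* Defs.v *)
From HB Require Import structures.
From mathcomp Require Import all_boot all_order all_algebra all_fingroup.
Set Implicit Arguments. Unset Strict Implicit. Unset Printing Implicit Defensive.
Import Order.TTheory GRing.Theory Num.Theory.
Local Open Scope ring_scope.

(* Vectors of Z^n are column vectors 'cV[int]_n; indices are 0-based in Rocq,
   1-based in the paper. *)

Section Defs.
Variable n : nat.
Implicit Types (x z : 'cV[int]_n).

Definition nzidx x : seq nat := [seq val i | i <- enum 'I_n & x i 0 != 0].
Definition zidx x : seq nat := [seq val i | i <- enum 'I_n & x i 0 == 0].

Definition entry x (a : nat) : int := nth 0 [seq x i 0 | i <- enum 'I_n] a.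

Definition flip x (t : nat) : 'cV[int]_n :=
  \col_i (if val i == t then - x i 0 else x i 0).

Definition movez x (a b : nat) : 'cV[int]_n :=
  \col_i (if val i == a then 0 else if val i == b then entry x a else x i 0).

(* the p-th column (p 1-based, 1 <= p <= n) of B(x, sb), sb in {1..k} *)
Definition Bcol x (sb p : nat) : 'cV[int]_n :=
  let I := nzidx x in let J := zidx x in let k := size I in
  if p == 1%N then x
  else if (p <= k + 1 - sb)%N then flip x (nth 0%N I (sb + p - 2))
  else if (p <= k)%N then flip x (nth 0%N I (sb + p - 2 - k))
  else movez x (nth 0%N I (sb - 1)) (nth 0%N J (p - k - 1)).

Definition Bmat x (sb : nat) : 'M[int]_n :=
  \matrix_(i, j) Bcol x sb j.+1 i 0.

Definition signperm z (pi : 'S_n) (s : {ffun 'I_n -> bool}) : 'cV[int]_n :=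
  \col_i ((-1) ^+ s i * z (pi i) 0).

Definition Nset z : seq 'cV[int]_n :=
  undup [seq signperm z ps.1 ps.2
        | ps <- enum {: 'S_n * {ffun 'I_n -> bool}}].

Definition Kfam z (k : nat) : seq ('cV[int]_n * nat) :=
  [seq (x, sb) | x <- Nset z, sb <- iota 1 k].

Definition is_column (v : 'cV[int]_n) (B : 'M[int]_n) : bool :=
  [exists j : 'I_n, col j B == v].

End Defs.

(* Main.v *)
Require Import Defs.
From HB Require Import structures.
From mathcomp Require Import all_boot all_order all_algebra all_fingroup zify.
Import Order.TTheory GRing.Theory Num.Theory.
Local Open Scope ring_scope.

Lemma count_enumT (T : finType) (P : pred T) : count P (enum T) = #|P|.
Proof. by rewrite cardE -size_filter /enum_mem filter_predT. Qed.

Section H.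
Variable n : nat.
Implicit Types (x y z : 'cV[int]_n).

Lemma entryE x (i : 'I_n) : entry x i = x i 0.
Proof.
rewrite /entry (nth_map i) ?size_enum_ord // nth_ord_enum //.
Qed.

Lemma mem_nzidx x (i : 'I_n) : (val i \in nzidx x) = (x i 0 != 0).
Proof. by rewrite /nzidx (mem_map val_inj) mem_filter mem_enum andbT. Qed.

Lemma mem_zidx x (i : 'I_n) : (val i \in zidx x) = (x i 0 == 0).
Proof. by rewrite /zidx (mem_map val_inj) mem_filter mem_enum andbT. Qed.

Lemma uniq_nzidx x : uniq (nzidx x).
Proof. by rewrite /nzidx (map_inj_uniq val_inj) filter_uniq ?enum_uniq. Qed.

Lemma uniq_zidx x : uniq (zidx x).
Proof. by rewrite /zidx (map_inj_uniq val_inj) filter_uniq ?enum_uniq. Qed.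

Lemma size_nzidx x : size (nzidx x) = #|[pred i : 'I_n | x i 0 != 0]|.
Proof. by rewrite /nzidx size_map size_filter count_enumT. Qed.

Lemma size_zidx x : size (zidx x) = (n - size (nzidx x))%N.
Proof.
rewrite /zidx /nzidx !size_map !size_filter.
have := count_predC (fun i : 'I_n => x i 0 != 0) (enum 'I_n).
rewrite size_enum_ord => h; rewrite -[X in (X - _)%N]h addKn.
by apply: eq_count => i /=; rewrite negbK.
Qed.

Lemma nth_nzidx x m : (m < size (nzidx x))%N ->
  exists i : 'I_n, nth 0%N (nzidx x) m = val i /\ x i 0 != 0.
Proof.
move=> hm; have := mem_nth 0%N hm; set a := nth _ _ _ => ha.
move: ha; rewrite {1}/nzidx => /mapP [i]; rewrite mem_filter => /andP [hi _] ->.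
by exists i.
Qed.

Lemma nth_zidx x m : (m < size (zidx x))%N ->
  exists i : 'I_n, nth 0%N (zidx x) m = val i /\ x i 0 == 0.
Proof.
move=> hm; have := mem_nth 0%N hm; set a := nth _ _ _ => ha.
move: ha; rewrite {1}/zidx => /mapP [i]; rewrite mem_filter => /andP [hi _] ->.
by exists i.
Qed.

Lemma nzidx_eq x y : (forall i, (x i 0 == 0) = (y i 0 == 0)) -> nzidx x = nzidx y.
Proof. by move=> h; rewrite /nzidx; congr map; apply: eq_filter => i; rewrite h. Qed.

Lemma colB x sb (j : 'I_n) : col j (Bmat x sb) = Bcol x sb j.+1.
Proof. by apply/matrixP => i l; rewrite !mxE ord1. Qed.

Lemma flipE x (j i : 'I_n) : flip x j i 0 = if i == j then - x i 0 else x i 0.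
Proof. by rewrite mxE. Qed.

Lemma movezE x (a b i : 'I_n) :
  movez x a b i 0 = if i == a then 0 else if i == b then x a 0 else x i 0.
Proof. by rewrite mxE entryE. Qed.

Lemma NsetP z x : reflect (exists pi s, x = signperm z pi s) (x \in Nset z).
Proof.
rewrite /Nset mem_undup; apply: (iffP mapP).
  by move=> [[pi s] _ ->]; exists pi, s.
by move=> [pi [s ->]]; exists (pi, s); rewrite ?mem_enum.
Qed.

Lemma Nset_closed z x (t : 'S_n) (e : {ffun 'I_n -> bool}) : x \in Nset z ->
  \col_i ((-1) ^+ e i * x (t i) 0) \in Nset z.
Proof.
move=> /NsetP [pi [s ->]]; apply/NsetP; exists (t * pi)%g, [ffun i => e i (+) s (t i)].
apply/matrixP => i l; rewrite !mxE ffunE permM signr_addb mulrA.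
by [].
Qed.

Lemma Nset_size z x : x \in Nset z ->
  size (nzidx x) = #|[set i : 'I_n | z i 0 != 0]|.
Proof.
move=> /NsetP [pi [s ->]]; rewrite size_nzidx.
rewrite -(card_preimset _ (@perm_inj _ pi)).
apply: eq_card => i; rewrite !inE mxE mulf_eq0 signr_eq0 /=.
by [].
Qed.


Definition mvv x (j c : 'I_n) : 'cV[int]_n :=
  \col_i (if i == j then x c 0 else if i == c then 0 else x i 0).
Definition rk x (c : 'I_n) := (index (val c) (nzidx x)).+1.
Definition Phi xi (j c : 'I_n) : 'cV[int]_n * nat :=
  if j == c then (xi, rk xi c)
  else if xi j 0 != 0 then (flip xi j, rk xi c)
  else (mvv xi j c, rk (mvv xi j c) j).

Lemma flipK x (j : 'I_n) : flip (flip x j) j = x.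
Proof. by apply/matrixP => i l; rewrite ord1 !flipE; case: (i == j); rewrite ?opprK. Qed.

Lemma nzidx_flip x (j : 'I_n) : nzidx (flip x j) = nzidx x.
Proof. by apply: nzidx_eq => i; rewrite flipE; case: (i == j); rewrite ?oppr_eq0. Qed.

Lemma flip_in z x (j : 'I_n) : x \in Nset z -> flip x j \in Nset z.
Proof.
move=> /(Nset_closed _ _ 1%g [ffun i => i == j]).
suff -> : flip x j = \col_i ((-1) ^+ [ffun i => i == j] i * x ((1%g : 'S_n) i) 0) by [].
apply/matrixP => i l; rewrite ord1 flipE mxE ffunE perm1.
by case: (i == j); rewrite ?expr1 ?expr0 ?mulN1r ?mul1r.
Qed.

Lemma mvv_in z x (j c : 'I_n) : x \in Nset z -> x j 0 = 0 -> mvv x j c \in Nset z.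
Proof.
move=> /(Nset_closed _ _ (tperm j c) [ffun _ => false]) h hj.
suff -> : mvv x j c = \col_i ((-1) ^+ [ffun _ : 'I_n => false] i * x (tperm j c i) 0) by [].
apply/matrixP => i l; rewrite ord1 !mxE ffunE expr0 mul1r.
case: (eqVneq i j) => [->|nij]; first by rewrite tpermL.
case: (eqVneq i c) => [->|nic]; first by rewrite tpermR.
by rewrite tpermD // eq_sym.
Qed.

Lemma mvvE x (j c i : 'I_n) :
  mvv x j c i 0 = if i == j then x c 0 else if i == c then 0 else x i 0.
Proof. by rewrite mxE. Qed.


Lemma size_nzidx_le x : (size (nzidx x) <= n)%N.
Proof.
rewrite /nzidx size_map size_filter.
by have := count_size (fun i : 'I_n => x i 0 != 0) (enum 'I_n); rewrite size_enum_ord.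
Qed.

Lemma Bcol1 x sb : Bcol x sb 1 = x.
Proof. by []. Qed.

Lemma Bcol_flip x sb m : let k := size (nzidx x) in
  (1 <= sb <= k)%N -> (m < k)%N -> m != sb.-1 ->
  exists p, (2 <= p <= k)%N /\ Bcol x sb p = flip x (nth 0%N (nzidx x) m).
Proof.
move=> k /andP [h1 h2] hm hne.
case: (leqP sb m) => h.
  exists (m - sb + 2)%N; split; first by apply/andP; split; lia.
  rewrite /Bcol -/k.
  have -> : (m - sb + 2 == 1)%N = false by lia.
  have -> : (m - sb + 2 <= k + 1 - sb)%N by lia.
  by have -> : (sb + (m - sb + 2) - 2 = m)%N by lia.
have hm' : (m < sb.-1)%N by move: hne; rewrite neq_ltn => /orP [|]; lia.
exists (m + k - sb + 2)%N; split; first by apply/andP; split; lia.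
rewrite /Bcol -/k.
have -> : (m + k - sb + 2 == 1)%N = false by lia.
have -> : (m + k - sb + 2 <= k + 1 - sb)%N = false by lia.
have -> : (m + k - sb + 2 <= k)%N by lia.
by have -> : (sb + (m + k - sb + 2) - 2 - k = m)%N by lia.
Qed.

Lemma Bcol_move x sb m : let k := size (nzidx x) in
  (1 <= k)%N -> (1 <= sb <= k)%N ->
  Bcol x sb (k + 1 + m) = movez x (nth 0%N (nzidx x) sb.-1) (nth 0%N (zidx x) m).
Proof.
move=> k hk /andP [h1 h2]; rewrite /Bcol -/k.
have -> : (k + 1 + m == 1)%N = false by lia.
have -> : (k + 1 + m <= k + 1 - sb)%N = false by lia.
have -> : (k + 1 + m <= k)%N = false by lia.
have -> : (k + 1 + m - k - 1 = m)%N by lia.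
by rewrite subn1.
Qed.

Lemma Bcol_cases x sb p : let k := size (nzidx x) in
  (1 <= sb <= k)%N -> (1 <= p <= n)%N ->
  [\/ p = 1%N /\ Bcol x sb p = x,
      exists2 m, (m < k)%N /\ m != sb.-1 & Bcol x sb p = flip x (nth 0%N (nzidx x) m) |
      exists2 m, (m < n - k)%N & Bcol x sb p = movez x (nth 0%N (nzidx x) sb.-1) (nth 0%N (zidx x) m)].
Proof.
move=> k /andP [h1 h2] /andP [p1 p2]; rewrite /Bcol -/k.
case: eqP => [->|hp1]; first by constructor 1.
case: ifP => hp2.
  by constructor 2; exists (sb + p - 2)%N => //; split; lia.
case: ifP => hp3.
  by constructor 2; exists (sb + p - 2 - k)%N => //; split; lia.
constructor 3; exists (p - k - 1)%N.
  lia.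
by rewrite subn1.
Qed.


Lemma isP v x sb : is_column v (Bmat x sb) = [exists j : 'I_n, Bcol x sb j.+1 == v].
Proof. by apply: eq_existsb => j; rewrite colB. Qed.

Lemma colPn v x sb p : (1 <= p <= n)%N -> Bcol x sb p = v -> is_column v (Bmat x sb).
Proof.
move=> /andP [p1 p2] hb; apply/existsP.
have hp : (p.-1 < n)%N by lia.
by exists (Ordinal hp); rewrite colB /= prednK // hb.
Qed.

Lemma mem_Kfam z k x sb : x \in Nset z -> (1 <= sb <= k)%N -> (x, sb) \in Kfam z k.
Proof.
move=> hx hsb; rewrite /Kfam; apply: (allpairs_f pair) => //.
by rewrite mem_iota add1n ltnS.
Qed.

Lemma index_lt x (c : 'I_n) : x c 0 != 0 -> (index (val c) (nzidx x) < size (nzidx x))%N.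
Proof. by rewrite index_mem mem_nzidx. Qed.

Lemma index_inj x (a b : 'I_n) : x a 0 != 0 -> x b 0 != 0 ->
  index (val a) (nzidx x) = index (val b) (nzidx x) -> a = b.
Proof.
move=> ha hb he; apply: val_inj.
by rewrite -(nth_index 0%N (_ : val a \in nzidx x)) ?mem_nzidx // he nth_index ?mem_nzidx.
Qed.

Section Main.
Variables (zeta : 'cV[int]_n) (k : nat).
Hypothesis hk : forall x, x \in Nset zeta -> size (nzidx x) = k.
Hypothesis hk1 : (1 <= k)%N.
Hypothesis hn : (1 <= n)%N.
Variable xi : 'cV[int]_n.
Hypothesis hxi : xi \in Nset zeta.

Lemma Phi_sound (j c : 'I_n) : xi c 0 != 0 ->
  Phi xi j c \in Kfam zeta k /\ is_column xi (Bmat (Phi xi j c).1 (Phi xi j c).2).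
Proof.
move=> hc; rewrite /Phi.
have hkn : (k <= n)%N by rewrite -(hk _ hxi) size_nzidx_le.
case: (eqVneq j c) => [ejc|njc].
  subst j; split; last by apply: (colPn _ _ _ 1).
  apply: mem_Kfam => //; rewrite /rk -(hk _ hxi) ltnS index_lt //.
case: ifP => hj.
  have hx := flip_in zeta xi j hxi.
  split.
    apply: mem_Kfam => //; rewrite /rk -(hk _ hxi) ltnS index_lt //.
  have hI := nzidx_flip xi j.
  have hsz : size (nzidx (flip xi j)) = k by rewrite hI (hk _ hxi).
  have hm : (index (val j) (nzidx xi) < k)%N by rewrite -(hk _ hxi) index_lt.
  have hne : index (val j) (nzidx xi) != (rk xi c).-1.
    by apply/eqP => /(index_inj _ _ _ hj hc) e; rewrite e eqxx in njc.
  have hsb : (1 <= rk xi c <= k)%N by rewrite /rk -(hk _ hxi) ltnS index_lt.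
  have := Bcol_flip (flip xi j) (rk xi c) (index (val j) (nzidx xi)).
  rewrite /= hsz => /(_ hsb hm hne) [p [hp hB]].
  apply: (colPn _ _ _ p); first by lia.
  by rewrite hB hI nth_index ?mem_nzidx // flipK.
move/negbFE: hj => /eqP hj.
set x := mvv xi j c.
have hx : x \in Nset zeta by apply: mvv_in.
have xj : x j 0 = xi c 0 by rewrite mvvE eqxx.
have xc : x c 0 = 0 by rewrite mvvE eq_sym (negbTE njc) eqxx.
have hsb : (1 <= rk x j <= k)%N by rewrite /rk -(hk _ hx) ltnS index_lt // xj.
split; first exact: mem_Kfam.
have hm : (index (val c) (zidx x) < n - k)%N.
  by rewrite -(hk _ hx) -size_zidx index_mem mem_zidx xc.
have := Bcol_move x (rk x j) (index (val c) (zidx x)).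
rewrite /= (hk _ hx) => /(_ hk1 hsb) hB.
apply: (colPn _ _ _ (k + 1 + index (val c) (zidx x))%N); first by lia.
rewrite hB nth_index ?mem_nzidx ?xj // nth_index ?mem_zidx ?xc //.
apply/matrixP => i l; rewrite ord1 movezE mvvE.
case: (eqVneq i j) => [->|nij]; first by rewrite hj.
case: (eqVneq i c) => [->|nic]; first by rewrite eqxx.
by rewrite mvvE (negbTE nij) (negbTE nic).
Qed.

Lemma rk_nth x sb : (1 <= sb <= size (nzidx x))%N -> forall c : 'I_n,
  nth 0%N (nzidx x) sb.-1 = val c -> rk x c = sb.
Proof.
move=> /andP [h1 h2] c hc; rewrite /rk -hc index_uniq ?uniq_nzidx ?prednK //.
Qed.

Lemma Phi_complete q : q \in Kfam zeta k -> is_column xi (Bmat q.1 q.2) ->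
  exists j c, xi c 0 != 0 /\ q = Phi xi j c.
Proof.
move=> /allpairsP [[x sb] [/= hx]]; rewrite mem_iota add1n ltnS => hsb -> /=.
rewrite isP => /existsP [j0 /eqP hB].
have hsz := hk _ hx.
have hsb' : (1 <= sb <= size (nzidx x))%N by rewrite hsz.
have hp : (1 <= j0.+1 <= n)%N by rewrite ltn0Sn ltn_ord.
have [c [hc xc]] : exists c : 'I_n, nth 0%N (nzidx x) sb.-1 = val c /\ x c 0 != 0.
  by apply: nth_nzidx; rewrite hsz; lia.
have hrk := rk_nth x sb hsb' c hc.
move: hB; case: (Bcol_cases x sb j0.+1 hsb' hp) => [[_ ->]|[m [hm hne] ->]|[m hm ->]] e.
- subst xi; exists c, c; split => //; rewrite /Phi eqxx.
  by rewrite hrk.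
- have [t [ht xt]] := nth_nzidx x m hm.
  rewrite ht in e; subst xi.
  have ntc : t != c.
    apply/eqP => etc; rewrite etc -hc in ht.
    move/eqP: ht; rewrite nth_uniq ?uniq_nzidx ?hsz; lia.
  exists t, c; split; first by rewrite flipE; case: (c == t); rewrite ?oppr_eq0.
  rewrite /Phi (negbTE ntc) flipE eqxx oppr_eq0 xt flipK.
  by rewrite /rk nzidx_flip -/(rk x c) hrk.
- rewrite hsz in hm.
  have [d [hd xd]] : exists d : 'I_n, nth 0%N (zidx x) m = val d /\ x d 0 == 0.
    by apply: nth_zidx; rewrite size_zidx hsz.
  rewrite hc hd in e; subst xi.
  have ncd : c != d by apply/eqP => ecd; rewrite ecd (eqP xd) eqxx in xc.
  exists c, d; split; first by rewrite movezE (eq_sym d c) (negbTE ncd) eqxx.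
  rewrite /Phi (negbTE ncd) movezE eqxx eqxx /=.
  have -> : mvv (movez x c d) c d = x.
    apply/matrixP => i l; rewrite ord1 mvvE !movezE.
    case: (eqVneq i c) => [->|nic]; first by rewrite eq_sym (negbTE ncd) eqxx.
    by case: (eqVneq i d) => [->|nid] //; rewrite (eqP xd).
  by rewrite hrk.
Qed.

Lemma rk_inj (c c' : 'I_n) : xi c 0 != 0 -> xi c' 0 != 0 -> rk xi c = rk xi c' -> c = c'.
Proof. by move=> h h' [] /(index_inj _ _ _ h h'). Qed.

Lemma Phi_inj (j c j' c' : 'I_n) : xi c 0 != 0 -> xi c' 0 != 0 ->
  Phi xi j c = Phi xi j' c' -> (j, c) = (j', c').
Proof.
move=> hc hc'; rewrite /Phi.
have F1 (a : 'I_n) : xi a 0 != 0 -> flip xi a <> xi.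
  move=> ha /matrixP/(_ a 0) e; rewrite flipE eqxx in e.
  by move/eqP: e; rewrite eqNr (negbTE ha).
have F2 (a b : 'I_n) : xi a 0 = 0 -> xi b 0 != 0 -> mvv xi a b <> xi.
  move=> ha hb /matrixP/(_ a 0) e; rewrite mvvE eqxx ha in e.
  by move: hb; rewrite e eqxx.
have F3 (a b a' : 'I_n) : xi a 0 = 0 -> xi b 0 != 0 -> mvv xi a b <> flip xi a'.
  move=> ha hb /matrixP/(_ a 0) e; rewrite mvvE flipE eqxx ha in e.
  by move: hb; rewrite e; case: (a == a'); rewrite ?oppr0 eqxx.
have F4 (a a' : 'I_n) : xi a 0 != 0 -> flip xi a = flip xi a' -> a = a'.
  move=> ha /matrixP/(_ a 0) e; rewrite !flipE eqxx in e.
  case: (eqVneq a a') e => // _ /eqP; rewrite eqNr (negbTE ha).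
  by [].
have F5 (a b a' b' : 'I_n) : xi a 0 = 0 -> xi b 0 != 0 -> xi a' 0 = 0 -> xi b' 0 != 0 ->
    mvv xi a b = mvv xi a' b' -> a = a' /\ b = b'.
  move=> ha hb ha' hb' e.
  have eaa : a = a'.
    move/matrixP/(_ a 0): (e) => e1; rewrite !mvvE eqxx in e1.
    case: (eqVneq a a') e1 => // naa; case: (eqVneq a b') => [eab|nab].
      by move: hb'; rewrite -eab ha eqxx.
    by rewrite ha => eb; move: hb; rewrite eb eqxx.
  subst a'; split => //.
  move/matrixP/(_ b 0): e => e1; rewrite !mvvE in e1.
  have nab : b != a by apply/eqP => eba; move: hb; rewrite eba ha eqxx.
  rewrite (negbTE nab) eqxx in e1.
  case: (eqVneq b b') e1 => // nbb e1; move: hb; rewrite e1 eqxx.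
  by [].
case: (eqVneq j c) => [ejc|njc]; case: (eqVneq j' c') => [ejc'|njc'].
- by case=> /(index_inj _ _ _ hc hc') ecc; subst.
- case: ifP => hj' [].
    by move=> /esym /(F1 _ hj').
  by move/negbFE/eqP: hj' => hj' /esym /(F2 _ _ hj' hc').
- case: ifP => hj [].
    by move=> /(F1 _ hj).
  by move/negbFE/eqP: hj => hj /(F2 _ _ hj hc).
case: ifP => hj; case: ifP => hj' [].
- by move=> /(F4 _ _ hj) -> /(index_inj _ _ _ hc hc') ->.
- by move/negbFE/eqP: hj' => hj' /esym /(F3 _ _ _ hj' hc').
- by move/negbFE/eqP: hj => hj /(F3 _ _ _ hj hc).
move/negbFE/eqP: hj => hj; move/negbFE/eqP: hj' => hj'.
by move=> /(F5 _ _ _ _ hj hc hj' hc') [-> ->].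
Qed.

End Main.
End H.

Theorem lemma3p2 (R : realFieldType) (n : nat) (r : R) (zeta : 'cV[int]_n)
    (k : nat) :
  (1 <= n)%N -> 0 < r ->
  ((\sum_(i < n) (zeta i 0) ^+ 2)%:~R = r ^+ 2 :> R) ->
  #|[set i : 'I_n | zeta i 0 != 0]| = k -> (1 <= k)%N ->
  forall xi : 'cV[int]_n, xi \in Nset zeta ->
    count (fun q : 'cV[int]_n * nat => is_column xi (Bmat q.1 q.2))
          (Kfam zeta k) = (n * k)%N.
Proof.
move=> hn _ _ hcard hk1 xi hxi.
have hk : forall x, x \in Nset zeta -> size (nzidx x) = k.
  by move=> x hx; rewrite (Nset_size _ _ _ hx) hcard.
pose L := [seq Phi n xi j c | j <- enum 'I_n, c <- [seq c <- enum 'I_n | xi c 0 != 0]].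
have Kuniq : uniq (Kfam zeta k).
  rewrite /Kfam allpairs_uniq ?undup_uniq ?iota_uniq //.
  by move=> [a b] [a' b'] _ _ /= [-> ->].
have Luniq : uniq L.
  rewrite allpairs_uniq ?enum_uniq ?index_enum_uniq ?filter_uniq ?enum_uniq ?index_enum_uniq //.
  move=> [j c] [j' c'] /allpairsP [[j1 c1] [_ h1 [-> ->]]].
  move=> /allpairsP [[j2 c2] [_ h2 [-> ->]]] /=.
  rewrite mem_filter in h1; rewrite mem_filter in h2.
  case/andP: h1 => h1 _; case/andP: h2 => h2 _.
  exact: (Phi_inj n xi j1 c1 j2 c2 h1 h2).
rewrite -size_filter.
have -> : size [seq q <- Kfam zeta k | is_column xi (Bmat q.1 q.2)] = size L.
  apply: perm_size; apply: uniq_perm; rewrite ?filter_uniq //.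
  move=> q; rewrite mem_filter; apply/andP/allpairsP.
    move=> [hP hq]; have [j [c [hc ->]]] := Phi_complete n zeta k hk hk1 hn xi hxi _ hq hP.
    by exists (j, c); rewrite mem_enum mem_filter mem_enum hc.
  move=> [[j c] [_ hc ->]] /=; rewrite mem_filter in hc; case/andP: hc => hc _.
  by have [h1 h2] := Phi_sound n zeta k hk hk1 hn xi hxi j c hc; split.
rewrite size_allpairs size_enum_ord size_filter.
congr (_ * _)%N; rewrite -(hk _ hxi) /nzidx size_map size_filter //.
Qed.
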